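(* Let $k-1\le r\le 2k-2$ and suppose the $x$-direction parameters $(\alpha^x_s)_{s=1}^k$, $(a^x_s)_{s=0}^k$ satisfy the one-dimensional $k$-$r$-order orthogonality condition. Put $A^x_s=a^x_s-a^x_{s-1}$, $s=1,\dots,k$. Then the $k$-point quadrature rule with nodes $\alpha^x_1,\dots,\alpha^x_k$ and weights $A^x_1,\dots,A^x_k$ is exact on $P^{r+1}([-1,1])$: $$\int_{-1}^1 g(x)\,dx=\sum_{s=1}^k A^x_s\,g(\alpha^x_s)\qquad\forall g\in P^{r+1}([-1,1]).$$ The same holds in the $y$-direction with $A^y_t=a^y_t-a^y_{t-1}$ and nodes $\alpha^y_t$ when the $y$-direction parameters satisfy the condition.
   Context: $k\ge1$ an integer, $P^m([-1,1])$ the polynomials of degree $\le m$. Dual parameters $-1<\alpha^x_1<\dots<\alpha^x_k<1$; interpolation parameters $-1=a^x_0<a^x_1<\dots<a^x_k=1$ with $a^x_{s-1}<\alpha^x_s<a^x_s$; put $\alpha^x_0=-1$, $\alpha^x_{k+1}=1$ (analogously in $y$). For $k-1\le r\le 2k-2$, the $x$-direction parameters satisfy the one-dimensional $k$-$r$-order orthogonality condition if $\int_{-1}^1 g(\hat x)\big(w(\hat x)-(\hat\Pi_xw)(\hat x)\big)d\hat x=0$ for all $g\in P^r([-1,1])$ and all $w\in P^1([-1,1])$, where $(\hat\Pi_xw)(\hat x)=w(a^x_s)$ for $\hat x\in(\alpha^x_s,\alpha^x_{s+1})$, $0\le s\le k$. *)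

(* Defs.v *)
From Stdlib Require Import Reals.
From Coquelicot Require Import Coquelicot.
Open Scope R_scope.

Definition is_poly_le (m : nat) (g : R -> R) : Prop :=
  exists c : nat -> R, forall x, g x = sum_f_R0 (fun i => c i * x ^ i) m.

Definition alphaE (k : nat) (alpha : nat -> R) (s : nat) : R :=
  if Nat.eqb s 0 then -1 else if Nat.eqb s (S k) then 1 else alpha s.

(* Piecewise constant interpolation: (Pi w)(x) = w(a_s) for
   x in [alpha_s, alpha_{s+1}), 0 <= s <= k (value on the finitely many
   breakpoints is irrelevant for integrals). *)
Definition Pi_interp (k : nat) (alpha a : nat -> R) (w : R -> R) (x : R) : R :=
  sum_f_R0 (fun s =>
    if Rle_dec (alphaE k alpha s) x then
      if Rlt_dec x (alphaE k alpha (S s)) then w (a s) else 0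
    else 0) k.

Definition admissible_params (k : nat) (alpha a : nat -> R) : Prop :=
  a 0%nat = -1 /\ a k = 1 /\
  (forall s, (s < k)%nat -> a s < a (S s)) /\
  (forall s, (1 <= s <= k)%nat -> a (pred s) < alpha s < a s).

Definition orth_condition (k r : nat) (alpha a : nat -> R) : Prop :=
  forall g w : R -> R, is_poly_le r g -> is_poly_le 1 w ->
    RInt (fun x => g x * (w x - Pi_interp k alpha a w x)) (-1) 1 = 0.

(* Main.v *)
Require Import Defs.
From Stdlib Require Import Reals Lra Lia FunctionalExtensionality.
From Coquelicot Require Import Coquelicot.
Open Scope R_scope.

Definition mpoly (c : nat -> R) (n : nat) (x : R) := sum_f_R0 (fun i => c i * x ^ i) n.

Lemma poly_is_derive (c : nat -> R) n x :
  is_derive (mpoly c n) x (sum_f_R0 (fun i => c i * (INR i * x ^ pred i)) n).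
Proof.
  unfold mpoly; induction n as [|n IH]; simpl.
  - auto_derive; auto; simpl; ring.
  - apply (is_derive_plus (fun y => sum_f_R0 (fun i => c i * y ^ i) n)
       (fun y => c (S n) * y ^ S n)); auto.
    apply is_derive_scal.
    pose proof (is_derive_pow (fun t => t) (S n) x 1 (is_derive_id x)) as H.
    change (match n with 0%nat => 1 | S _ => INR n + 1 end) with (INR (S n)). replace (INR (S n) * x ^ n) with (INR (S n) * 1 * x ^ pred (S n)) by (simpl; ring). exact H.
Qed.

Lemma poly_cont c n x : continuous (mpoly c n) x.
Proof. apply (ex_derive_continuous (mpoly c n)). eexists. apply poly_is_derive. Qed.

Lemma dpoly_eq c r x :
  sum_f_R0 (fun i => c i * (INR i * x ^ pred i)) (S r) =
  mpoly (fun i => c (S i) * INR (S i)) r x.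
Proof.
  rewrite decomp_sum by lia. simpl pred. unfold mpoly.
  replace (c 0%nat * (INR 0 * x ^ 0)) with 0 by (simpl; ring).
  rewrite Rplus_0_l. apply sum_eq. intros i _. simpl pred. ring.
Qed.

Lemma antider_eq c r x :
  sum_f_R0 (fun i => (match i with 0%nat => 0 | S j => c j / INR (S j) end) * (INR i * x ^ pred i)) (S r) =
  mpoly c r x.
Proof.
  rewrite decomp_sum by lia. simpl pred.
  replace (0 * (INR 0 * x ^ 0)) with 0 by (simpl; ring).
  rewrite Rplus_0_l. unfold mpoly. apply sum_eq. intros i _. simpl pred.
  field. pose proof (pos_INR i). rewrite S_INR. lra.
Qed.

Lemma sum_single (f : nat -> R) n s :
  (s <= n)%nat -> (forall t, (t <= n)%nat -> t <> s -> f t = 0) ->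
  sum_f_R0 f n = f s.
Proof.
  induction n as [|n IH]; intros Hs Hz; simpl.
  - replace s with 0%nat by lia. reflexivity.
  - destruct (Nat.eq_dec s (S n)) as [->|Hne].
    + rewrite (sum_eq _ (fun _ => 0)). rewrite sum_cte. ring.
      intros i Hi. apply Hz; lia.
    + rewrite IH by (try lia; intros; apply Hz; lia). rewrite (Hz (S n)) by lia. ring.
Qed.

Lemma telesc (G F : R -> R) (b a : nat -> R) n :
  sum_f_R0 (fun s => (G (b (S s)) * (b (S s) - a s) - F (b (S s)))
                     - (G (b s) * (b s - a s) - F (b s))) (S n) =
  G (b (S (S n))) * (b (S (S n)) - a (S n)) - F (b (S (S n)))
  - (G (b 0%nat) * (b 0%nat - a 0%nat) - F (b 0%nat))
  + sum_f_R0 (fun i => (a (S i) - a i) * G (b (S i))) n.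
Proof.
  induction n as [|n IH].
  - simpl. ring.
  - rewrite tech5. rewrite IH. simpl. ring.
Qed.

Lemma chasles_sum (f : R -> R) (b : nat -> R) (v : nat -> R) n :
  (forall s, (s <= n)%nat -> is_RInt f (b s) (b (S s)) (v s)) ->
  is_RInt f (b 0%nat) (b (S n)) (sum_f_R0 v n).
Proof.
  induction n as [|n IH]; intros H; simpl.
  - apply H; lia.
  - apply (is_RInt_Chasles f _ (b (S n))). apply IH; intros; apply H; lia.
    apply H; lia.
Qed.
Lemma RInt_ftc (Hf dh : R -> R) a b : (forall x, is_derive Hf x (dh x)) -> (forall x, continuous dh x) -> is_RInt dh a b (Hf b - Hf a).
Proof. intros H1 H2. exact (is_RInt_derive Hf dh a b (fun x _ => H1 x) (fun x _ => H2 x)). Qed.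
Lemma deriv_H (G dG F : R -> R) c x : is_derive G x (dG x) -> is_derive F x (G x) ->
  is_derive (fun y => G y * (y - c) - F y) x (dG x * (x - c)).
Proof.
  intros HG HF.
  apply is_derive_Reals in HG. apply is_derive_Reals in HF. apply is_derive_Reals.
  replace (dG x * (x - c)) with ((dG x * (x - c) + G x * (1 - 0)) - G x) by ring.
  apply (derivable_pt_lim_minus (fun y => G y * (y - c)) F).
  apply (derivable_pt_lim_mult G (fun y => y - c)); auto.
  apply (derivable_pt_lim_minus (fun y => y) (fun _ => c)).
  apply derivable_pt_lim_id. apply derivable_pt_lim_const. auto.
Qed.
Lemma cont_lin (dG : R -> R) c x : continuous dG x -> continuous (fun y => dG y * (y - c)) x.
Proof.
  intros H. apply continuity_pt_filterlim in H. apply continuity_pt_filterlim.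
  apply (continuity_pt_mult dG (fun y => y - c)); auto.
  apply (continuity_pt_minus (fun y => y) (fun _ => c)). apply derivable_continuous_pt, derivable_pt_id.
  apply continuity_pt_const. intros u v; reflexivity.
Qed.

Lemma alphaE_mid k alpha s : (1 <= s <= k)%nat -> alphaE k alpha s = alpha s.
Proof.
  intros H. unfold alphaE. destruct (Nat.eqb_spec s 0); try lia.
  destruct (Nat.eqb_spec s (S k)); try lia. reflexivity.
Qed.
Lemma alphaE_0 k alpha : alphaE k alpha 0 = -1.
Proof. reflexivity. Qed.
Lemma alphaE_Sk k alpha : alphaE k alpha (S k) = 1.
Proof. unfold alphaE. simpl. rewrite Nat.eqb_refl. reflexivity. Qed.

Lemma alphaE_step k alpha a : (1 <= k)%nat -> admissible_params k alpha a ->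
  forall i, (i <= k)%nat -> alphaE k alpha i < alphaE k alpha (S i).
Proof.
  intros Hk Hadm i Hi. destruct Hadm as [H0 [Hk1 [Ha Hal]]].
  destruct i as [|i].
  - rewrite alphaE_0, alphaE_mid by lia.
    specialize (Hal 1%nat ltac:(lia)). simpl in Hal. lra.
  - rewrite (alphaE_mid k alpha (S i)) by lia.
    destruct (Nat.eq_dec (S i) k) as [E|E].
    + rewrite E, alphaE_Sk. specialize (Hal k ltac:(lia)). lra.
    + rewrite alphaE_mid by lia.
      pose proof (Hal (S i) ltac:(lia)). pose proof (Hal (S (S i)) ltac:(lia)).
      simpl in *. lra.
Qed.

Lemma alphaE_mono k alpha a : (1 <= k)%nat -> admissible_params k alpha a ->
  forall s t, (s <= t <= S k)%nat -> alphaE k alpha s <= alphaE k alpha t.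
Proof.
  intros Hk Hadm s t. induction t as [|t IH]; intros H.
  - replace s with 0%nat by lia. lra.
  - destruct (Nat.eq_dec s (S t)) as [->|]. lra.
    pose proof (alphaE_step k alpha a Hk Hadm t ltac:(lia)). specialize (IH ltac:(lia)). lra.
Qed.

Lemma Pi_piece k alpha a : (1 <= k)%nat -> admissible_params k alpha a ->
  forall s x, (s <= k)%nat -> alphaE k alpha s < x < alphaE k alpha (S s) ->
  Pi_interp k alpha a (fun y => y) x = a s.
Proof.
  intros Hk Hadm s x Hs Hx. unfold Pi_interp.
  rewrite (sum_single _ k s Hs).
  - destruct (Rle_dec _ x); [|lra]. destruct (Rlt_dec x _); [|lra]. reflexivity.
  - intros t Ht Hne. destruct (Rle_dec _ x) as [H1|]; [|reflexivity].
    destruct (Rlt_dec x _) as [H2|]; [|reflexivity]. exfalso.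
    destruct (Nat.lt_ge_cases t s).
    + pose proof (alphaE_mono k alpha a Hk Hadm (S t) s ltac:(lia)). lra.
    + pose proof (alphaE_mono k alpha a Hk Hadm (S s) t ltac:(lia)). lra.
Qed.

Theorem mainTheorem2 (k r : nat) (alpha a : nat -> R) :
  (1 <= k)%nat ->
  (k - 1 <= r <= 2 * k - 2)%nat ->
  admissible_params k alpha a ->
  orth_condition k r alpha a ->
  forall g : R -> R, is_poly_le (S r) g ->
    RInt g (-1) 1 =
    sum_f_R0 (fun i => (a (S i) - a i) * g (alpha (S i))) (k - 1).
Proof.
  intros Hk Hr Hadm Horth g [c Hg].
  assert (Eg : g = mpoly c (S r)) by (apply functional_extensionality; exact Hg).
  subst g. clear Hg.
  set (G := mpoly c (S r)).
  set (dG := mpoly (fun i => c (S i) * INR (S i)) r).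
  set (F := mpoly (fun i => match i with 0%nat => 0 | S j => c j / INR (S j) end) (S (S r))).
  assert (HG : forall x, is_derive G x (dG x)).
  { intros x. unfold dG. rewrite <- dpoly_eq. apply poly_is_derive. }
  assert (HF : forall x, is_derive F x (G x)).
  { intros x. unfold G. rewrite <- antider_eq. apply poly_is_derive. }
  assert (Ho := Horth dG (fun y => y) ltac:(exists (fun i => c (S i) * INR (S i)); reflexivity)
     ltac:(exists (fun i => match i with 1%nat => 1 | _ => 0 end); intros; simpl; ring)).
  set (f := fun x => dG x * (x - Pi_interp k alpha a (fun y => y) x)) in Ho.
  set (H := fun s x => G x * (x - a s) - F x).
  set (b := alphaE k alpha).
  assert (Hp : forall s, (s <= k)%nat -> is_RInt f (b s) (b (S s)) (H s (b (S s)) - H s (b s))).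
  { intros s Hs. pose proof (alphaE_step k alpha a Hk Hadm s Hs) as Hlt. fold b in Hlt.
    apply is_RInt_ext with (fun x => dG x * (x - a s)).
    { intros x Hx. rewrite Rmin_left, Rmax_right in Hx by lra.
      unfold f. rewrite (Pi_piece k alpha a Hk Hadm s x Hs Hx). reflexivity. }
    apply (RInt_ftc (H s)).
    - intros x. unfold H. apply deriv_H; auto.
    - intros x. apply cont_lin. apply poly_cont. }
  pose proof (chasles_sum f b _ k Hp) as Hc.
  unfold b in Hc. rewrite alphaE_0, alphaE_Sk in Hc.
  assert (Hc2 := @is_RInt_unique R_CompleteNormedModule _ _ _ _ Hc). clear Hc. rename Hc2 into Hc. fold f in Ho. rewrite Ho in Hc.
  assert (HI : is_RInt G (-1) 1 (F 1 - F (-1))).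
  { apply RInt_ftc; auto. intros x; apply poly_cont. }
  assert (HI2 := @is_RInt_unique R_CompleteNormedModule _ _ _ _ HI). clear HI. rename HI2 into HI. fold G. rewrite HI.
  destruct Hadm as [Ha0 [Hak [_ _]]].
  destruct k as [|n]; [lia|].
  unfold H in Hc. rewrite (telesc G F (alphaE (S n) alpha) a n) in Hc.
  rewrite alphaE_Sk, alphaE_0, Hak, Ha0 in Hc.
  replace (S n - 1)%nat with n by lia.
  rewrite (sum_eq _ (fun i => (a (S i) - a i) * G (alphaE (S n) alpha (S i)))).
  - lra.
  - intros i Hi. rewrite alphaE_mid by lia. reflexivity.
Qed.
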